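(* Let $a<b$ and let $\mathbf{v}:[a,b]\to\mathbb{R}^n$ be continuously differentiable, and suppose $\mathbf{v}(t)=0$ for only finitely many $t\in[a,b]$. Then there exists a continuously differentiable function $\mu:[a,b]\to\mathbb{R}$ such that $|\mu(t)|=\|\mathbf{v}(t)\|_2$ for all $t\in[a,b]$.
   Context: $\|\cdot\|_2$ is the Euclidean norm on $\mathbb{R}^n$. *)

(* Defs.v *)
From Stdlib Require Import Reals Lra Lia List.
Open Scope R_scope.

(* Vectors of R^n are represented as x : nat -> R, only components i < n matter. *)
Fixpoint sumsq (n : nat) (x : nat -> R) : R :=
  match n with
  | O => 0
  | S m => sumsq m x + (x m) ^ 2
  end.

Definition norm2 (n : nat) (x : nat -> R) : R := sqrt (sumsq n x).

Definition C1_on (a b : R) (f : R -> R) : Prop :=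
  exists f' : R -> R,
    (forall t, a <= t <= b ->
       limit1_in (fun s => (f s - f t) / (s - t))
                 (fun s => a <= s <= b /\ s <> t) (f' t) t) /\
    (forall t, a <= t <= b ->
       limit1_in f' (fun s => a <= s <= b) (f' t) t).

(* Main.v *)
Require Import Defs.
From Stdlib Require Import Reals Lra Lia List ClassicalEpsilon Classical.
Open Scope R_scope.

Lemma lim_ext (f g : R -> R) (D : R -> Prop) (l x0 : R) :
  (exists d, 0 < d /\ forall x, D x -> Rabs (x - x0) < d -> f x = g x) ->
  limit1_in f D l x0 -> limit1_in g D l x0.
Proof.
  intros [d [Hd H]] Hf eps He.
  destruct (Hf eps He) as [al [Hal Hal2]].
  exists (Rmin al d); split. { apply Rmin_pos; lra. }
  intros x [Dx Hx]. simpl in *. unfold R_dist in *.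
  rewrite <- H; auto. 2: { apply Rlt_le_trans with (1:=Hx); apply Rmin_r. }
  apply Hal2; split; auto. simpl; unfold R_dist.
  apply Rlt_le_trans with (1:=Hx); apply Rmin_l.
Qed.

Lemma lim_sub (f : R -> R) (D D' : R -> Prop) (l x0 : R) :
  (forall x, D' x -> D x) -> limit1_in f D l x0 -> limit1_in f D' l x0.
Proof.
  intros H Hf eps He. destruct (Hf eps He) as [al [Hal Hal2]].
  exists al; split; auto. intros x [Dx Hx]. apply Hal2; auto.
Qed.

Lemma lim_const (c : R) (D : R -> Prop) (x0 : R) : limit1_in (fun _ => c) D c x0.
Proof. exact (limit_free (fun _ => c) D x0 x0). Qed.

Lemma lim_id (D : R -> Prop) (x0 : R) : limit1_in (fun x => x) D x0 x0.
Proof. intros eps He. exists eps; split; auto. intros x [_ H]; exact H. Qed.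

Lemma lim_comp (g f : R -> R) (D : R -> Prop) (l x0 : R) :
  continuity_pt g l -> limit1_in f D l x0 -> limit1_in (fun x => g (f x)) D (g l) x0.
Proof.
  intros Hg Hf eps He.
  destruct (Hg eps He) as [al [Hal Hal2]].
  destruct (Hf al Hal) as [be [Hbe Hbe2]].
  exists be; split; auto. intros x [Dx Hx].
  destruct (Req_dec (f x) l) as [E|E].
  - rewrite E. simpl; unfold R_dist. rewrite Rminus_diag, Rabs_R0; lra.
  - apply Hal2. split. { split. exact I. auto. } apply Hbe2; auto.
Qed.

Lemma lim_punct (f : R -> R) (D : R -> Prop) (x0 : R) :
  limit1_in f (fun x => D x /\ x <> x0) (f x0) x0 -> limit1_in f D (f x0) x0.
Proof.
  intros Hf eps He. destruct (Hf eps He) as [al [Hal Hal2]].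
  exists al; split; auto. intros x [Dx Hx].
  destruct (Req_dec x x0) as [E|E].
  - subst. simpl; unfold R_dist. rewrite Rminus_diag, Rabs_R0; lra.
  - apply Hal2; auto.
Qed.

Lemma lim_sqr (f : R -> R) (D : R -> Prop) (l x0 : R) :
  limit1_in f D l x0 -> limit1_in (fun x => f x ^ 2) D (l ^ 2) x0.
Proof.
  intros H. apply lim_ext with (fun x => f x * f x).
  { exists 1; split; [lra|]; intros; ring. }
  replace (l^2) with (l*l) by ring. apply limit_mul; auto.
Qed.

Lemma lim_abs (f : R -> R) (D : R -> Prop) (l x0 : R) :
  limit1_in f D l x0 -> limit1_in (fun x => Rabs (f x)) D (Rabs l) x0.
Proof. intros H. apply lim_comp; auto. apply Rcontinuity_abs. Qed.

Lemma lim_sqrt (f : R -> R) (D : R -> Prop) (l x0 : R) :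
  0 <= l -> limit1_in f D l x0 -> limit1_in (fun x => sqrt (f x)) D (sqrt l) x0.
Proof. intros H1 H. apply lim_comp; auto. apply continuity_pt_sqrt; auto. Qed.

Fixpoint dot (n : nat) (x y : nat -> R) : R :=
  match n with O => 0 | S m => dot m x y + x m * y m end.
Fixpoint sabs (n : nat) (y : nat -> R) : R :=
  match n with O => 0 | S m => sabs m y + Rabs (y m) end.

Lemma sumsq_ge0 n x : 0 <= sumsq n x.
Proof. induction n; simpl. lra. pose proof (pow2_ge_0 (x n)). lra. Qed.

Lemma sabs_ge0 n x : 0 <= sabs n x.
Proof. induction n; simpl. lra. pose proof (Rabs_pos (x n)). lra. Qed.

Lemma sumsq_le_comp n x i : (i < n)%nat -> x i ^ 2 <= sumsq n x.
Proof.
  induction n; intros H. lia. simpl. destruct (Nat.eq_dec i n).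
  - subst. pose proof (sumsq_ge0 n x). lra.
  - pose proof (pow2_ge_0 (x n)). assert (Hi : (i < n)%nat) by lia. specialize (IHn Hi). lra.
Qed.



Lemma sumsq_pos n x i : (i < n)%nat -> x i <> 0 -> 0 < sumsq n x.
Proof.
  intros H1 H2. pose proof (sumsq_le_comp n x i H1).
  assert (0 < x i ^ 2). { simpl. rewrite Rmult_1_r. apply Rsqr_pos_lt in H2. exact H2. } lra.
Qed.

Lemma sumsq_ext n x y : (forall i, (i < n)%nat -> x i = y i) -> sumsq n x = sumsq n y.
Proof. induction n; intros H; simpl; auto. rewrite IHn, H; auto. Qed.
Lemma dot_ext n x y x' y' : (forall i, (i < n)%nat -> x i = x' i /\ y i = y' i) -> dot n x y = dot n x' y'.
Proof. induction n; intros H; simpl; auto. destruct (H n) as [-> ->]; auto. rewrite IHn; auto. Qed.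
Lemma sabs_ext n x y : (forall i, (i < n)%nat -> x i = y i) -> sabs n x = sabs n y.
Proof. induction n; intros H; simpl; auto. rewrite IHn, H; auto. Qed.

Lemma sumsq_zero n x : (forall i, (i < n)%nat -> x i = 0) -> sumsq n x = 0.
Proof. induction n; intros H; simpl; auto. rewrite IHn, H; auto. ring. Qed.

Lemma sumsq_zero_inv n x : sumsq n x = 0 -> forall i, (i < n)%nat -> x i = 0.
Proof.
  intros H i Hi. destruct (Req_dec (x i) 0); auto.
  pose proof (sumsq_pos n x i Hi H0). lra.
Qed.

Lemma sabs_zero n x : (forall i, (i < n)%nat -> x i = 0) -> sabs n x = 0.
Proof. induction n; intros H; simpl; auto. rewrite IHn, H; auto. rewrite Rabs_R0; ring. Qed.

Lemma sumsq_scale n c x : sumsq n (fun i => c * x i) = c ^ 2 * sumsq n x.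
Proof. induction n; simpl. ring. rewrite IHn. ring. Qed.

Lemma dot_scale n c x y : dot n (fun i => c * x i) y = c * dot n x y.
Proof. induction n; simpl. ring. rewrite IHn. ring. Qed.

Lemma dot_self n x : dot n x x = sumsq n x.
Proof. induction n; simpl. ring. rewrite IHn. ring. Qed.

Lemma dot_bound n x y : Rabs (dot n x y) <= sqrt (sumsq n x) * sabs n y.
Proof.
  induction n; simpl. rewrite Rabs_R0, sqrt_0; lra.
  pose proof (sumsq_ge0 n x). pose proof (pow2_ge_0 (x n)).
  assert (A : sqrt (sumsq n x) <= sqrt (sumsq n x + x n ^ 2)) by (apply sqrt_le_1_alt; lra).
  assert (B : Rabs (x n) <= sqrt (sumsq n x + x n ^ 2)).
  { rewrite <- (sqrt_pow2 (Rabs (x n))) by apply Rabs_pos. apply sqrt_le_1_alt.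
    rewrite pow2_abs. lra. }
  pose proof (sabs_ge0 n y). pose proof (Rabs_pos (y n)).
  eapply Rle_trans. apply Rabs_triang. rewrite Rabs_mult.
  rewrite Rmult_plus_distr_l.
  apply Rplus_le_compat.
  - eapply Rle_trans. apply IHn. apply Rmult_le_compat_r; auto.
  - apply Rmult_le_compat_r; auto.
Qed.

Lemma lim_sumsq n F L D x0 :
  (forall i, (i < n)%nat -> limit1_in (fun s => F s i) D (L i) x0) ->
  limit1_in (fun s => sumsq n (F s)) D (sumsq n L) x0.
Proof.
  induction n; intros H; simpl.
  - apply lim_const.
  - apply limit_plus. apply IHn; auto. apply lim_sqr; auto.
Qed.

Lemma lim_dot n F G L M D x0 :
  (forall i, (i < n)%nat -> limit1_in (fun s => F s i) D (L i) x0) ->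
  (forall i, (i < n)%nat -> limit1_in (fun s => G s i) D (M i) x0) ->
  limit1_in (fun s => dot n (F s) (G s)) D (dot n L M) x0.
Proof.
  induction n; intros H1 H2; simpl.
  - apply lim_const.
  - apply limit_plus. apply IHn; auto. apply limit_mul; auto.
Qed.

Lemma lim_sabs n F L D x0 :
  (forall i, (i < n)%nat -> limit1_in (fun s => F s i) D (L i) x0) ->
  limit1_in (fun s => sabs n (F s)) D (sabs n L) x0.
Proof.
  induction n; intros H; simpl.
  - apply lim_const.
  - apply limit_plus. apply IHn; auto. apply lim_abs; auto.
Qed.

Definition sg (L : list R) (t : R) : R :=
  fold_right (fun z acc => (if Rlt_dec z t then -1 else 1) * acc) 1 L.

Lemma sg_pm L t : sg L t = 1 \/ sg L t = -1.
Proof.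
  induction L; simpl. auto. destruct (Rlt_dec a t); destruct IHL as [-> | ->]; lra.
Qed.

Lemma sg_abs L t : Rabs (sg L t) = 1.
Proof. destruct (sg_pm L t) as [-> | ->]. apply Rabs_R1. rewrite Rabs_left by lra; lra. Qed.

Lemma sg_iso L t : exists d, 0 < d /\ forall z, In z L -> z <> t -> d <= Rabs (z - t).
Proof.
  induction L as [|z L IH].
  - exists 1; split. lra. intros z [].
  - destruct IH as [d [Hd H]]. destruct (Req_dec z t) as [E|E].
    + exists d; split; auto. intros y [<-|Hy] Hne; [congruence|auto].
    + exists (Rmin d (Rabs (z - t))). split. apply Rmin_pos; auto. apply Rabs_pos_lt; lra.
      intros y [<-|Hy] Hne. apply Rmin_r. eapply Rle_trans. apply Rmin_l. auto.
Qed.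

Lemma sg_const L s t : (forall z, In z L -> (z < s <-> z < t)) -> sg L s = sg L t.
Proof.
  induction L as [|z L IH]; intros H; simpl; auto.
  rewrite IH by (intros; apply H; simpl; auto).
  destruct (Rlt_dec z s), (Rlt_dec z t); auto.
  - exfalso. apply n. apply H; simpl; auto.
  - exfalso. apply n. apply H; simpl; auto.
Qed.

Lemma sg_flip L s t : NoDup L -> In t L -> (forall z, In z L -> z <> t -> (z < s <-> z < t)) ->
  t < s -> sg L s = - sg L t.
Proof.
  induction L as [|z L IH]; intros ND Hin H Hts. destruct Hin.
  inversion ND; subst. simpl. destruct Hin as [<- | Hin].
  - rewrite (sg_const L s z). destruct (Rlt_dec z s), (Rlt_dec z z); lra.
    intros y Hy. apply H. simpl; auto. intro E; subst; contradiction.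
  - rewrite IH; auto. 2: intros; apply H; simpl; auto.
    assert (z <> t) by (intro E; subst; contradiction).
    destruct (Rlt_dec z s), (Rlt_dec z t); try ring.
    + exfalso. apply n. apply H; simpl; auto.
    + exfalso. apply n. apply H; simpl; auto.
Qed.

Lemma iso_side L t d : (forall z, In z L -> z <> t -> d <= Rabs (z - t)) ->
  forall s, Rabs (s - t) < d -> forall z, In z L -> z <> t -> (z < s <-> z < t).
Proof.
  intros H s Hs z Hz Hne. specialize (H z Hz Hne).
  apply Rabs_def2 in Hs.
  destruct (Rle_dec 0 (z - t)). rewrite Rabs_pos_eq in H by lra. lra.
  rewrite Rabs_left in H by lra. lra.
Qed.

Lemma lim_squeeze (f g : R -> R) (D : R -> Prop) (x0 : R) :
  (exists d, 0 < d /\ forall x, D x -> Rabs (x - x0) < d -> Rabs (f x) <= g x) ->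
  limit1_in g D 0 x0 -> limit1_in f D 0 x0.
Proof.
  intros [d [Hd H]] Hg eps He.
  destruct (Hg eps He) as [al [Hal Hal2]].
  exists (Rmin al d); split. { apply Rmin_pos; lra. }
  intros x [Dx Hx]. simpl in *. unfold R_dist in *.
  assert (Hx1 : Rabs (x - x0) < al) by (apply Rlt_le_trans with (1:=Hx); apply Rmin_l).
  assert (Hx2 : Rabs (x - x0) < d) by (apply Rlt_le_trans with (1:=Hx); apply Rmin_r).
  specialize (Hal2 x (conj Dx Hx1)). simpl in Hal2; unfold R_dist in Hal2.
  specialize (H x Dx Hx2). rewrite Rminus_0_r in *.
  pose proof (Rle_abs (g x)). lra.
Qed.

Lemma sqrt_diff x y : 0 <= x -> 0 <= y -> 0 < sqrt x + sqrt y ->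
  sqrt x - sqrt y = (x - y) * / (sqrt x + sqrt y).
Proof.
  intros Hx Hy H. rewrite <- (sqrt_sqrt x Hx) at 2. rewrite <- (sqrt_sqrt y Hy) at 2.
  field. lra.
Qed.

Lemma dot_diff n x y h : h <> 0 ->
  dot n (fun i => x i + y i) (fun i => (x i - y i) / h) = (sumsq n x - sumsq n y) / h.
Proof. intros Hh. induction n; simpl. field; auto. rewrite IHn. field; auto. Qed.

Definition mu (Zs : list R) (n : nat) (v : R -> nat -> R) (t : R) : R :=
  sg Zs t * norm2 n (v t).

Definition mud (Zs : list R) (n : nat) (v : R -> nat -> R) (dv : nat -> R -> R) (t : R) : R :=
  if excluded_middle_informative (In t Zs) then - sg Zs t * norm2 n (fun i => dv i t)
  else sg Zs t * (dot n (v t) (fun i => dv i t) * / norm2 n (v t)).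

Lemma vcont a b n v dv :
  (forall i t, (i < n)%nat -> a <= t <= b ->
     limit1_in (fun s => (v s i - v t i) / (s - t)) (fun s => a <= s <= b /\ s <> t) (dv i t) t) ->
  forall i t, (i < n)%nat -> a <= t <= b ->
  limit1_in (fun s => v s i) (fun s => a <= s <= b) (v t i) t.
Proof.
  intros HD i t Hi Ht. apply (lim_punct (fun s => v s i)).
  assert (H : limit1_in (fun s => (v s i - v t i) / (s - t) * (s - t) + v t i)
     (fun s => a <= s <= b /\ s <> t) (dv i t * (t - t) + v t i) t).
  { apply limit_plus. apply limit_mul. apply HD; auto.
    apply limit_minus. apply lim_id. apply lim_const. apply lim_const. }
  replace (dv i t * (t - t) + v t i) with (v t i) in H by ring.
  revert H. apply lim_ext. exists 1; split. lra.
  intros s [_ Hs] _. field. lra.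
Qed.

Lemma nz_pos a b n v Zs :
  (forall t, In t Zs <-> (a <= t <= b /\ forall i, (i < n)%nat -> v t i = 0)) ->
  forall t, a <= t <= b -> ~ In t Zs -> 0 < sumsq n (v t).
Proof.
  intros HZ t Ht Hn. pose proof (sumsq_ge0 n (v t)).
  destruct (Rle_lt_or_eq_dec _ _ H) as [H'|H']; auto.
  exfalso. apply Hn. apply HZ. split; auto. apply sumsq_zero_inv. auto.
Qed.

Lemma M1 a b n v dv Zs :
  (forall i t, (i < n)%nat -> a <= t <= b ->
     limit1_in (fun s => (v s i - v t i) / (s - t)) (fun s => a <= s <= b /\ s <> t) (dv i t) t) ->
  (forall t, In t Zs <-> (a <= t <= b /\ forall i, (i < n)%nat -> v t i = 0)) ->
  NoDup Zs ->
  forall t, a <= t <= b ->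
  limit1_in (fun s => (mu Zs n v s - mu Zs n v t) / (s - t)) (fun s => a <= s <= b /\ s <> t)
     (mud Zs n v dv t) t.
Proof.
  intros HD HZ HN t Ht.
  pose proof (vcont a b n v dv HD) as HV.
  destruct (sg_iso Zs t) as [d [Hd Hiso]].
  pose proof (iso_side Zs t d Hiso) as Hside.
  unfold mud; destruct (excluded_middle_informative (In t Zs)) as [Hin|Hnin].
  -
    assert (Hz : forall i, (i < n)%nat -> v t i = 0) by (apply HZ; auto).
    apply lim_ext with (fun s => - sg Zs t * sqrt (sumsq n (fun i => (v s i - v t i) / (s - t)))).
    + exists d; split; auto. intros s [Hs Hst] Hsd.
      unfold mu, norm2. rewrite (sumsq_zero n (v t) Hz), sqrt_0.
      assert (E : sumsq n (v s) = (s - t) ^ 2 * sumsq n (fun i => (v s i - v t i) / (s - t))).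
      { rewrite <- sumsq_scale. apply sumsq_ext. intros i Hi. rewrite (Hz i Hi). field. lra. }
      rewrite E, sqrt_mult by (apply pow2_ge_0 || apply sumsq_ge0).
      rewrite <- pow2_abs, sqrt_pow2 by apply Rabs_pos.
      destruct (Rlt_dec t s) as [Hts|Hts].
      * rewrite (sg_flip Zs s t HN Hin (Hside s Hsd) Hts).
        rewrite Rabs_pos_eq by lra. field. lra.
      * rewrite (sg_const Zs s t).
        rewrite Rabs_left by lra. field. lra.
        intros z Hz'. destruct (Req_dec z t) as [->|Hne]. split; intro; lra.
        apply Hside; auto.
    + apply (limit_mul (fun _ => - sg Zs t) (fun s => sqrt (sumsq n (fun i => (v s i - v t i) / (s - t))))).
      apply lim_const. unfold norm2. apply lim_sqrt. apply sumsq_ge0.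
      apply (lim_sumsq n (fun s i => (v s i - v t i) / (s - t))). intros; apply HD; auto.
  - pose proof (nz_pos a b n v Zs HZ t Ht Hnin) as Wpos.
    pose proof (sqrt_lt_R0 _ Wpos) as Npos.
    apply lim_ext with (fun s => sg Zs t * (dot n (fun i => v s i + v t i) (fun i => (v s i - v t i) / (s - t))
        * / (sqrt (sumsq n (v s)) + sqrt (sumsq n (v t))))).
    + exists d; split; auto. intros s [Hs Hst] Hsd.
      unfold mu, norm2. rewrite (sg_const Zs s t).
      2: { intros z Hz'. apply Hside; auto. intro E; subst; contradiction. }
      rewrite dot_diff by lra.
      pose proof (sqrt_pos (sumsq n (v s))).
      rewrite <- Rmult_minus_distr_l.
      rewrite sqrt_diff by (try apply sumsq_ge0; lra).
      field. lra.
    + replace (sg Zs t * (dot n (v t) (fun i => dv i t) * / norm2 n (v t))) with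
        (sg Zs t * (dot n (fun i => v t i + v t i) (fun i => dv i t) * / (sqrt (sumsq n (v t)) + sqrt (sumsq n (v t))))).
      2: { unfold norm2. rewrite (dot_ext n (fun i => v t i + v t i) (fun i => dv i t)
              (fun i => 2 * v t i) (fun i => dv i t)), dot_scale.
           field. lra. intros; split; ring. }
      apply (limit_mul (fun _ => sg Zs t)). apply lim_const.
      apply limit_mul.
      * apply (lim_dot n (fun s i => v s i + v t i) (fun s i => (v s i - v t i) / (s - t))).
        -- intros i Hi. apply (limit_plus (fun s => v s i) (fun _ => v t i)).
           apply lim_sub with (fun s => a <= s <= b). tauto. apply HV; auto. apply lim_const.
        -- intros; apply HD; auto.
      * apply (limit_inv (fun s => sqrt (sumsq n (v s)) + sqrt (sumsq n (v t)))).
        apply (limit_plus (fun s => sqrt (sumsq n (v s))) (fun _ => sqrt (sumsq n (v t)))).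
        apply lim_sqrt. apply sumsq_ge0. apply (lim_sumsq n v).
        intros. apply lim_sub with (fun s => a <= s <= b). tauto. apply HV; auto.
        apply lim_const. lra.
Qed.

Lemma M2 a b n v dv Zs :
  (forall i t, (i < n)%nat -> a <= t <= b ->
     limit1_in (fun s => (v s i - v t i) / (s - t)) (fun s => a <= s <= b /\ s <> t) (dv i t) t) ->
  (forall i t, (i < n)%nat -> a <= t <= b ->
     limit1_in (dv i) (fun s => a <= s <= b) (dv i t) t) ->
  (forall t, In t Zs <-> (a <= t <= b /\ forall i, (i < n)%nat -> v t i = 0)) ->
  NoDup Zs ->
  forall t, a <= t <= b ->
  limit1_in (mud Zs n v dv) (fun s => a <= s <= b) (mud Zs n v dv t) t.
Proof.
  intros HD HC HZ HN t Ht.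
  pose proof (vcont a b n v dv HD) as HV.
  assert (HV' : forall i, (i < n)%nat -> limit1_in (fun s => v s i) (fun s => a <= s <= b /\ s <> t) (v t i) t).
  { intros. apply lim_sub with (fun s => a <= s <= b). tauto. apply HV; auto. }
  assert (HC' : forall i, (i < n)%nat -> limit1_in (fun s => dv i s) (fun s => a <= s <= b /\ s <> t) (dv i t) t).
  { intros. apply lim_sub with (fun s => a <= s <= b). tauto. apply HC; auto. }
  destruct (sg_iso Zs t) as [d [Hd Hiso]].
  pose proof (iso_side Zs t d Hiso) as Hside.
  assert (Hmud : forall s, a <= s <= b -> s <> t -> Rabs (s - t) < d ->
     ~ In s Zs /\ mud Zs n v dv s = sg Zs s * (dot n (v s) (fun i => dv i s) * / norm2 n (v s))).
  { intros s Hs Hst Hsd. assert (Hn : ~ In s Zs).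
    { intro Hin. specialize (Hiso s Hin Hst). lra. }
    split; auto. unfold mud. destruct (excluded_middle_informative (In s Zs)); tauto. }
  apply lim_punct.
  unfold mud at 2; destruct (excluded_middle_informative (In t Zs)) as [Hin|Hnin].
  - assert (Hz : forall i, (i < n)%nat -> v t i = 0) by (apply HZ; auto).
    assert (Hq : forall s, a <= s <= b -> s <> t ->
      sumsq n (v s) = (s - t) ^ 2 * sumsq n (fun i => (v s i - v t i) / (s - t)) /\
      dot n (v s) (fun i => dv i s) = (s - t) * dot n (fun i => (v s i - v t i) / (s - t)) (fun i => dv i s)).
    { intros s Hs Hst. split.
      - rewrite <- sumsq_scale. apply sumsq_ext. intros i Hi. rewrite (Hz i Hi). field. lra.
      - rewrite <- dot_scale. apply dot_ext. intros i Hi. rewrite (Hz i Hi). split; [field; lra | auto]. }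
    pose proof (sumsq_ge0 n (fun i => dv i t)) as Sge.
    destruct (Rle_lt_or_eq_dec _ _ Sge) as [Spos|S0].
    + apply lim_ext with (fun s => - sg Zs t * (dot n (fun i => (v s i - v t i) / (s - t)) (fun i => dv i s)
          * / sqrt (sumsq n (fun i => (v s i - v t i) / (s - t))))).
      * exists d; split; auto. intros s [Hs Hst] Hsd.
        destruct (Hmud s Hs Hst Hsd) as [Hn ->].
        pose proof (nz_pos a b n v Zs HZ s Hs Hn) as Wpos.
        destruct (Hq s Hs Hst) as [E1 E2]. unfold norm2. rewrite E2, E1.
        assert (Qpos : 0 < sumsq n (fun i => (v s i - v t i) / (s - t))).
        { pose proof (sumsq_ge0 n (fun i => (v s i - v t i) / (s - t))).
          destruct (Rle_lt_or_eq_dec _ _ H) as [H'|H']; auto. rewrite E1, <- H' in Wpos. lra. }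
        pose proof (sqrt_lt_R0 _ Qpos).
        rewrite sqrt_mult by (apply pow2_ge_0 || apply sumsq_ge0).
        rewrite <- pow2_abs, sqrt_pow2 by apply Rabs_pos.
        destruct (Rlt_dec t s) as [Hts|Hts].
        -- rewrite (sg_flip Zs s t HN Hin (Hside s Hsd) Hts).
           rewrite Rabs_pos_eq by lra. field. lra.
        -- rewrite (sg_const Zs s t).
           rewrite Rabs_left by lra. field. lra.
           intros z Hz'. destruct (Req_dec z t) as [->|Hne]. split; intro; lra.
           apply Hside; auto.
      * replace (- sg Zs t * norm2 n (fun i => dv i t)) with
          (- sg Zs t * (dot n (fun i => dv i t) (fun i => dv i t) * / sqrt (sumsq n (fun i => dv i t)))).
        2: { unfold norm2. rewrite dot_self. pose proof (sqrt_lt_R0 _ Spos).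
             rewrite <- (sqrt_sqrt _ Sge) at 1. field. lra. }
        apply (limit_mul (fun _ => - sg Zs t)). apply lim_const.
        apply limit_mul.
        -- apply (lim_dot n (fun s i => (v s i - v t i) / (s - t)) (fun s i => dv i s)); auto.
        -- apply (limit_inv (fun s => sqrt (sumsq n (fun i => (v s i - v t i) / (s - t))))).
           apply lim_sqrt. apply sumsq_ge0.
           apply (lim_sumsq n (fun s i => (v s i - v t i) / (s - t))). auto.
           pose proof (sqrt_lt_R0 _ Spos). lra.
    + replace (- sg Zs t * norm2 n (fun i => dv i t)) with 0.
      2: { unfold norm2. rewrite <- S0, sqrt_0. ring. }
      apply lim_squeeze with (fun s => sabs n (fun i => dv i s)).
      * exists d; split; auto. intros s [Hs Hst] Hsd.
        destruct (Hmud s Hs Hst Hsd) as [Hn ->].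
        pose proof (nz_pos a b n v Zs HZ s Hs Hn) as Wpos.
        pose proof (sqrt_lt_R0 _ Wpos) as Npos.
        unfold norm2 in *. rewrite !Rabs_mult, sg_abs, Rabs_inv, (Rabs_pos_eq (sqrt _)) by lra.
        pose proof (dot_bound n (v s) (fun i => dv i s)).
        apply Rmult_le_reg_r with (sqrt (sumsq n (v s))); auto.
        replace (1 * (Rabs (dot n (v s) (fun i => dv i s)) * / sqrt (sumsq n (v s))) * sqrt (sumsq n (v s)))
          with (Rabs (dot n (v s) (fun i => dv i s))) by (field; lra).
        lra.
      * replace 0 with (sabs n (fun i => dv i t)).
        apply (lim_sabs n (fun s i => dv i s)). auto.
        apply sabs_zero. apply sumsq_zero_inv. auto.
  - pose proof (nz_pos a b n v Zs HZ t Ht Hnin) as Wpos.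
    pose proof (sqrt_lt_R0 _ Wpos) as Npos.
    apply lim_ext with (fun s => sg Zs t * (dot n (v s) (fun i => dv i s) * / norm2 n (v s))).
    + exists d; split; auto. intros s [Hs Hst] Hsd.
      destruct (Hmud s Hs Hst Hsd) as [Hn ->].
      rewrite (sg_const Zs s t); auto.
      intros z Hz'. apply Hside; auto. intro E; subst; contradiction.
    + apply (limit_mul (fun _ => sg Zs t)). apply lim_const.
      apply limit_mul.
      * apply (lim_dot n v (fun s i => dv i s)); auto.
      * apply (limit_inv (fun s => norm2 n (v s))). unfold norm2.
        apply lim_sqrt. apply sumsq_ge0. apply (lim_sumsq n v). auto.
        unfold norm2; lra.
Qed.

Theorem mainTheorem3 (a b : R) (n : nat) (v : R -> nat -> R) :
  a < b ->
  (forall i : nat, (i < n)%nat -> C1_on a b (fun t => v t i)) ->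
  (exists l : list R, forall t : R, a <= t <= b ->
       (forall i : nat, (i < n)%nat -> v t i = 0) -> In t l) ->
  exists mu : R -> R,
    C1_on a b mu /\
    (forall t : R, a <= t <= b -> Rabs (mu t) = norm2 n (v t)).
Proof.
  intros Hab HC1 [l Hl].
  assert (H' : forall i, exists f' : R -> R, (i < n)%nat ->
    (forall t, a <= t <= b ->
       limit1_in (fun s => (v s i - v t i) / (s - t))
                 (fun s => a <= s <= b /\ s <> t) (f' t) t) /\
    (forall t, a <= t <= b ->
       limit1_in f' (fun s => a <= s <= b) (f' t) t)).
  { intros i. destruct (Nat.lt_ge_cases i n) as [Hi|Hi].
    - destruct (HC1 i Hi) as [f' Hf']. exists f'. auto.
    - exists (fun _ => 0). intro; lia. }
  set (dv := fun i => proj1_sig (constructive_indefinite_description _ (H' i))).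
  assert (Hdv : forall i, (i < n)%nat ->
    (forall t, a <= t <= b ->
       limit1_in (fun s => (v s i - v t i) / (s - t))
                 (fun s => a <= s <= b /\ s <> t) (dv i t) t) /\
    (forall t, a <= t <= b ->
       limit1_in (dv i) (fun s => a <= s <= b) (dv i t) t)).
  { intros i Hi. unfold dv. destruct (constructive_indefinite_description _ (H' i)) as [f Hf]. simpl. auto. }
  set (zb := fun t => if excluded_middle_informative (a <= t <= b /\ forall i, (i < n)%nat -> v t i = 0)
                      then true else false).
  set (Zs := nodup Req_EM_T (filter zb l)).
  assert (HZ : forall t, In t Zs <-> (a <= t <= b /\ forall i, (i < n)%nat -> v t i = 0)).
  { intros t. unfold Zs. rewrite nodup_In, filter_In. unfold zb.
    destruct (excluded_middle_informative (a <= t <= b /\ forall i, (i < n)%nat -> v t i = 0)) as [P|P].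
    - split; auto. intros _. split; auto. apply Hl; tauto.
    - split. intros [_ F]; discriminate. tauto. }
  assert (HN : NoDup Zs) by apply NoDup_nodup.
  exists (mu Zs n v). split.
  - exists (mud Zs n v dv). split.
    + intros t Ht. apply (M1 a b n v dv Zs); auto. intros; apply Hdv; auto.
    + intros t Ht. apply (M2 a b n v dv Zs); auto; intros; apply Hdv; auto.
  - intros t Ht. unfold mu. rewrite Rabs_mult, sg_abs, Rabs_pos_eq. ring.
    unfold norm2; apply sqrt_pos.
Qed.
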